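(* Let $\mathcal M=(\mathbf M^{(\lambda)})_{\lambda>0}$ be a weight matrix on $\mathbb N_0^d$. (i) If (R1): for every $\lambda>0$ there exist $\kappa\ge\lambda$, $B,C,H>0$ with $\alpha^{\alpha/2}M^{(\lambda)}_\beta\le BC^{|\alpha|}H^{|\alpha+\beta|}M^{(\kappa)}_{\alpha+\beta}$ for all $\alpha,\beta\in\mathbb N_0^d$, and (R2): for every $\lambda>0$ there exist $\kappa\ge\lambda$, $A\ge1$ with $M^{(\lambda)}_{\alpha+e_j}\le A^{|\alpha|+1}M^{(\kappa)}_\alpha$ for all $\alpha$ and $1\le j\le d$, then $H_\gamma\in\mathcal S_{\{\mathcal M\}}$ for all $\gamma\in\mathbb N_0^d$. (ii) If (B1): for every $\lambda>0$ there exist $0<\kappa\le\lambda$, $H>0$ such that for every $C>0$ there is $B>0$ with $\alpha^{\alpha/2}M^{(\kappa)}_\beta\le BC^{|\alpha|}H^{|\alpha+\beta|}M^{(\lambda)}_{\alpha+\beta}$ for all $\alpha,\beta$, and (B2): for every $\lambda>0$ there exist $0<\kappa\le\lambda$, $A\ge1$ with $M^{(\kappa)}_{\alpha+e_j}\le A^{|\alpha|+1}M^{(\lambda)}_\alpha$ for all $\alpha$ and $1\le j\le d$, then $H_\gamma\in\mathcal S_{(\mathcal M)}$ for all $\gamma\in\mathbb N_0^d$.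
   Context: A weight matrix is a family $\mathcal M=(\mathbf M^{(\lambda)})_{\lambda>0}$ with $\mathbf M^{(\lambda)}=(M^{(\lambda)}_\alpha)_{\alpha\in\mathbb N_0^d}$ sequences of positive reals, $M^{(\lambda)}_0=1$, and $M^{(\lambda)}_\alpha\le M^{(\kappa)}_\alpha$ for all $\alpha$ whenever $0<\lambda\le\kappa$. Notation: $|\alpha|=\sum\alpha_j$, $e_j$ the $j$-th unit vector, $\alpha^{\alpha/2}=\prod_j\alpha_j^{\alpha_j/2}$ with $0^0=1$. $\|f\|_{\infty,\mathbf M,h}:=\sup_{\alpha,\beta}\frac{\|x^\alpha\partial^\beta f\|_\infty}{h^{|\alpha+\beta|}M_{\alpha+\beta}}$; $\mathcal S_{\{\mathcal M\}}$ ($\mathcal S_{(\mathcal M)}$) is the set of $f\in C^\infty(\mathbb R^d)$ with $\|f\|_{\infty,\mathbf M^{(\lambda)},h}<\infty$ for some (for all) $\lambda,h>0$. Hermite functions: $H_\gamma(x)=(2^{|\gamma|}\gamma!\pi^{d/2})^{-1/2}h_\gamma(x)e^{-|x|^2/2}$, $h_\gamma(x)=(-1)^{|\gamma|}e^{|x|^2}\partial^\gamma e^{-|x|^2}$. *)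

(* Defs.v *)
From HB Require Import structures.
From mathcomp Require Import all_boot all_order all_algebra.
From mathcomp Require Import all_classical all_reals all_analysis.
Set Implicit Arguments. Unset Strict Implicit. Unset Printing Implicit Defensive.
Import Order.TTheory GRing.Theory Num.Theory.
Import numFieldNormedType.Exports.
Local Open Scope ring_scope.

Definition mi_abs (d : nat) (a : 'I_d -> nat) : nat := (\sum_(i < d) a i)%N.
Definition mi_add (d : nat) (a b : 'I_d -> nat) : 'I_d -> nat := fun i => (a i + b i)%N.
Definition mi_unit (d : nat) (j : 'I_d) : 'I_d -> nat := fun i => nat_of_bool (i == j).
Definition mi_zero (d : nat) : 'I_d -> nat := fun _ => 0%N.
Definition mi_fact (d : nat) (a : 'I_d -> nat) : nat := (\prod_(i < d) (a i)`!)%N.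
(* alpha^{alpha/2} = prod_j alpha_j^{alpha_j/2} = prod_j sqrt(alpha_j^{alpha_j}), 0^0 = 1 *)
Definition mi_halfpow (R : realType) (d : nat) (a : 'I_d -> nat) : R :=
  \prod_(i < d) Num.sqrt (((a i) ^ (a i))%N)%:R.

Definition weight_matrix (R : realType) (d : nat) (M : R -> ('I_d -> nat) -> R) : Prop :=
  (forall l : R, 0 < l -> forall a, 0 < M l a) /\
  (forall l : R, 0 < l -> M l (@mi_zero d) = 1) /\
  (forall l k : R, 0 < l -> l <= k -> forall a, M l a <= M k a).

Definition coord_unit (R : realType) (d : nat) (j : 'I_d) : 'rV[R]_d := delta_mx 0 j.

Definition pderiv (R : realType) (d : nat) (j : 'I_d) (f : 'rV[R]_d -> R) : 'rV[R]_d -> R :=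
  fun x => derive f x (@coord_unit R d j).

Definition dseq (R : realType) (d : nat) (s : seq 'I_d) (f : 'rV[R]_d -> R) : 'rV[R]_d -> R :=
  foldr (@pderiv R d) f s.

Definition dmulti (R : realType) (d : nat) (b : 'I_d -> nat) (f : 'rV[R]_d -> R) : 'rV[R]_d -> R :=
  foldr (fun j g => iter (b j) (@pderiv R d j) g) f (enum 'I_d).

Definition smooth (R : realType) (d : nat) (f : 'rV[R]_d -> R) : Prop :=
  forall s : seq 'I_d,
    continuous (dseq s f) /\
    (forall (x : 'rV[R]_d) (j : 'I_d), derivable (dseq s f) x (@coord_unit R d j)).

Definition monom (R : realType) (d : nat) (a : 'I_d -> nat) (x : 'rV[R]_d) : R :=
  \prod_(i < d) (x 0 i) ^+ (a i).

Definition sqnorm (R : realType) (d : nat) (x : 'rV[R]_d) : R := \sum_(i < d) (x 0 i) ^+ 2.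

(* ||f||_{infty, M, h} < infty, i.e. sup_{alpha,beta} ||x^alpha d^beta f||_infty /
   (h^{|alpha+beta|} M_{alpha+beta}) is finite *)
Definition finite_norm (R : realType) (d : nat) (M : ('I_d -> nat) -> R) (h : R)
  (f : 'rV[R]_d -> R) : Prop :=
  exists K : R, forall (a b : 'I_d -> nat) (x : 'rV[R]_d),
    `| monom a x * dmulti b f x | <= K * (h ^+ mi_abs (mi_add a b) * M (mi_add a b)).

Definition S_roumieu (R : realType) (d : nat) (M : R -> ('I_d -> nat) -> R)
  (f : 'rV[R]_d -> R) : Prop :=
  smooth f /\ exists l h : R, 0 < l /\ 0 < h /\ finite_norm (M l) h f.

Definition S_beurling (R : realType) (d : nat) (M : R -> ('I_d -> nat) -> R)
  (f : 'rV[R]_d -> R) : Prop :=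
  smooth f /\ forall l h : R, 0 < l -> 0 < h -> finite_norm (M l) h f.

Definition hermite_poly (R : realType) (d : nat) (g : 'I_d -> nat) (x : 'rV[R]_d) : R :=
  (-1) ^+ mi_abs g * expR (sqnorm x) * dmulti g (fun y => expR (- sqnorm y)) x.

Definition hermite_fun (R : realType) (d : nat) (g : 'I_d -> nat) (x : 'rV[R]_d) : R :=
  (Num.sqrt (2 ^+ mi_abs g * (mi_fact g)%:R * Num.sqrt (pi ^+ d)))^-1 *
  hermite_poly g x * expR (- sqnorm x / 2).

(* Main.v *)
Require Import Defs.
From HB Require Import structures.
From mathcomp Require Import all_boot all_order all_algebra.
From mathcomp Require Import all_classical all_reals all_analysis.
From mathcomp Require Import ring lra.
Import Order.TTheory GRing.Theory Num.Theory.
Import numFieldNormedType.Exports.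
Local Open Scope classical_set_scope.
Local Open Scope ring_scope.

Section S.
Variable R : realType.
Definition Ew (w t : R) := expR (- (w * t ^+ 2)).
Definition gfun (w : R) (p : {poly R}) (t : R) := p.[t] * Ew w t.
Definition Dw (c : R) (p : {poly R}) := p^`() - c *: ('X * p).

Lemma is_derive_Ew (w t : R) : is_derive t (1:R) (Ew w) (- (2 * w * t) * Ew w t).
Proof.
have hp : Ew w = expR \o horner (- (w *: 'X^2)).
  by apply/funext => s; rewrite /Ew /= hornerN hornerZ hornerXn.
rewrite hp; apply: DeriveDef.
  apply/derivable1_diffP; apply: differentiable_comp.
    exact/derivable1_diffP/derivable_horner.
  exact/derivable1_diffP/ex_derive.
rewrite -derive1E derive1_comp; last 2 first.
- exact: derivable_horner.
- exact: ex_derive.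
rewrite -derivE derive1E derive_val derivN derivZ derivXn /=.
rewrite !hornerE /=.
by rewrite mulrC /comp; congr (_ * _); ring.
Qed.
Lemma is_derive_gfun (w : R) p (t : R) :
  is_derive t (1:R) (gfun w p) ((Dw (2 * w) p).[t] * Ew w t).
Proof.
have -> : gfun w p = (horner p * Ew w)%R by apply/funext.
apply: is_derive_eq.
by rewrite /Dw !hornerE /= /Ew expr2 /GRing.scale /= mulrA; ring.
Qed.
Variable d : nat.
Lemma is_derive_line (f : 'rV[R]_d -> R) (a v : 'rV[R]_d) (g : R -> R) (t0 k dg : R) :
  (forall h : R, f (h *: v + a) = k * g (h + t0)) -> is_derive t0 (1:R) g dg ->
  is_derive a v f (k * dg).
Proof.
move=> H dG.
have fa : f a = k * g t0 by have := H 0; rewrite scale0r !add0r.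
have E : (fun h : R => h^-1 *: ((f \o shift a) (h *: v) - f a)) =
   (fun h : R => k * (h^-1 *: ((g \o shift t0) (h *: (1:R)) - g t0))).
  apply/funext => h; rewrite /= H fa /GRing.scale /= mulr1; ring.
have cG : (fun h : R => h^-1 *: ((g \o shift t0) (h *: (1:R)) - g t0)) @ 0^' --> dg.
  rewrite -(@derive_val _ _ _ _ _ _ _ dG). exact: (@ex_derive _ _ _ _ _ _ _ dG).
have cF : (fun h : R => h^-1 *: ((f \o shift a) (h *: v) - f a)) @ 0^' --> k * dg.
  by rewrite E; apply: cvgMr.
apply: DeriveDef; first by apply/cvg_ex; exists (k * dg).
exact: cvg_lim cF.
Qed.
Definition Prod (w c : R) (P : 'I_d -> {poly R}) (x : 'rV[R]_d) : R :=
  c * \prod_(i < d) gfun w (P i) (x 0 i).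
Definition upd (P : 'I_d -> {poly R}) (j : 'I_d) (q : {poly R}) : 'I_d -> {poly R} :=
  fun i => if i == j then q else P i.

Lemma coord_shift (x : 'rV[R]_d) (h : R) (j i : 'I_d) :
  (h *: @coord_unit R d j + x) 0 i = (if i == j then h + x 0 i else x 0 i).
Proof.
rewrite /coord_unit !mxE eqxx /=; case: eqP => _ /=; first by rewrite mulr1.
by rewrite mulr0 add0r.
Qed.

Lemma is_derive_Prod (w c : R) P (x : 'rV[R]_d) (j : 'I_d) :
  is_derive x (@coord_unit R d j) (Prod w c P) (Prod w c (upd P j (Dw (2 * w) (P j))) x).
Proof.
set k := c * \prod_(i < d | i != j) gfun w (P i) (x 0 i).
have key : Prod w c (upd P j (Dw (2 * w) (P j))) x =
    k * ((Dw (2 * w) (P j)).[x 0 j] * Ew w (x 0 j)).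
  rewrite /Prod (bigD1 j) //= /upd eqxx.
  rewrite (eq_bigr (fun i => gfun w (P i) (x 0 i))); last by move=> i /negbTE ->.
  by rewrite /k /gfun; ring.
rewrite key; apply: (@is_derive_line _ _ _ (gfun w (P j)) (x 0 j)); last exact: is_derive_gfun.
move=> h; rewrite /Prod (bigD1 j) //= coord_shift eqxx.
rewrite (eq_bigr (fun i => gfun w (P i) (x 0 i))); last first.
  by move=> i /negbTE ne; rewrite coord_shift ne.
by rewrite /k /gfun addrC; ring.
Qed.
Lemma pderiv_Prod (w c : R) P (j : 'I_d) :
  pderiv j (Prod w c P) = Prod w c (upd P j (Dw (2 * w) (P j))).
Proof. by apply/funext => x; rewrite /pderiv (@derive_val _ _ _ _ _ _ _ (is_derive_Prod w c P x j)). Qed.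

Lemma cont_gfun (w : R) p : continuous (gfun w p).
Proof.
move=> t; apply: differentiable_continuous; apply/derivable1_diffP.
exact: (@ex_derive _ _ _ _ _ _ _ (is_derive_gfun w p t)).
Qed.

Lemma cont_coord (w : R) p (i : 'I_d) : continuous (fun x : 'rV[R]_d => gfun w p (x 0 i)).
Proof.
move=> x; exact: (@continuous_comp _ _ _ (fun y : 'rV[R]_d => y 0 i) (gfun w p) x
   (@coord_continuous R 1 d 0 i x) (cont_gfun w p _)).
Qed.

Lemma cont_Prod (w c : R) P : continuous (Prod w c P).
Proof.
have H : forall r : seq 'I_d, continuous (fun x : 'rV[R]_d => \prod_(i <- r) gfun w (P i) (x 0 i)).
  elim => [|i r IH].
    have -> : (fun x : 'rV[R]_d => \prod_(i <- [::]) gfun w (P i) (x 0 i)) = cst 1.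
      by apply/funext => x; rewrite big_nil.
    by move=> x; apply: cst_continuous.
  have -> : (fun x : 'rV[R]_d => \prod_(k <- i :: r) gfun w (P k) (x 0 k)) =
     (fun x => gfun w (P i) (x 0 i) * \prod_(k <- r) gfun w (P k) (x 0 k)).
    by apply/funext => x; rewrite big_cons.
  move=> x; exact: (@continuousM _ _ (fun y : 'rV[R]_d => gfun w (P i) (y 0 i))
     (fun y => \prod_(k <- r) gfun w (P k) (y 0 k)) x (cont_coord _ _ _ x) (IH x)).
move=> x; have hh := (@continuousM _ _ (fun _ : 'rV[R]_d => c)
     (fun y => \prod_(k < d) gfun w (P k) (y 0 k)) x ltac:(apply: cst_continuous) (H _ x)).
exact: hh.
Qed.
End S.
Arguments Prod {R d}. Arguments upd {R d}. Arguments gfun {R}. Arguments Dw {R}.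
Arguments pderiv_Prod {R d}. Arguments cont_Prod {R d}. Arguments is_derive_Prod {R d}.

Arguments Ew {R}.
Section B.
Variable R : realType.
Definition sf (k : nat) : R := Num.sqrt (k`!%:R).
Definition Nn (n : nat) (q : {poly R}) : R := \sum_(k < n) `|q`_k| * sf k.
Definition D1 (p : {poly R}) := p^`() - 'X * p.

Lemma sf_ge0 k : 0 <= sf k.
Proof. exact: sqrtr_ge0. Qed.
Lemma sf_ge1 k : 1 <= sf k.
Proof. by rewrite /sf -[X in X <= _]sqrtr1 ler_sqrt // ler1n fact_gt0. Qed.
Lemma sfS k : sf k.+1 = Num.sqrt (k.+1%:R) * sf k.
Proof. by rewrite /sf factS natrM sqrtrM // ler0n. Qed.
Lemma Nn_ge0 n (q : {poly R}) : 0 <= Nn n q.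
Proof. by apply: sumr_ge0 => k _; rewrite mulr_ge0 // sf_ge0. Qed.
Lemma Nn_widen n (q : {poly R}) : (size q <= n)%N -> Nn n.+1 q = Nn n q.
Proof. by move=> H; rewrite /Nn big_ord_recr /= nth_default // normr0 mul0r addr0. Qed.
Lemma Nn_sub n (p q : {poly R}) : Nn n (p - q) <= Nn n p + Nn n q.
Proof.
rewrite /Nn -big_split /=; apply: ler_sum => k _; rewrite coefB -mulrDl.
by apply: ler_wpM2r; [exact: sf_ge0 | exact: ler_normB].
Qed.
Lemma lerMl2 {x y z : R} : 0 <= x -> y <= z -> x * y <= x * z.
Proof. by move=> h; apply: ler_wpM2l. Qed.
Lemma lerMr2 {x y z : R} : 0 <= x -> y <= z -> y * x <= z * x.
Proof. by move=> h; apply: ler_wpM2r. Qed.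
Lemma sqrt_mono (i j : nat) : (i <= j)%N -> Num.sqrt (i%:R : R) <= Num.sqrt j%:R.
Proof. by move=> H; rewrite ler_sqrt // ler_nat. Qed.

Lemma Nn_X {n} {q : {poly R}} : (size q <= n)%N -> Nn n.+1 ('X * q) <= Num.sqrt n%:R * Nn n q.
Proof.
move=> H; rewrite /Nn big_ord_recl /= coefXM eqxx normr0 mul0r add0r mulr_sumr.
apply: ler_sum => k _; rewrite coefXM /= sfS.
rewrite mulrCA; apply: ler_wpM2r; first by rewrite mulr_ge0 // sf_ge0.
exact: sqrt_mono.
Qed.

Lemma Nn_deriv {n} {q : {poly R}} : (size q <= n)%N -> Nn n q^`() <= Num.sqrt n%:R * Nn n q.
Proof.
move=> H; rewrite -(Nn_widen _ _ H) /Nn [X in _ <= _ * X]big_ord_recl mulrDr.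
apply: ler_wpDl; first by rewrite mulr_ge0 ?sqrtr_ge0 // mulr_ge0 // sf_ge0.
rewrite mulr_sumr; apply: ler_sum => k _; rewrite coef_deriv normrMn /=.
have e : (k.+1%:R : R) * sf k = Num.sqrt k.+1%:R * sf k.+1.
  by rewrite sfS mulrA -expr2 sqr_sqrtr // ler0n.
rewrite /bump /= add1n -[`|q`_k.+1| *+ k.+1]mulr_natr -mulrA e mulrCA.
apply: (@ler_wpM2r _ (`|q`_k.+1| * sf k.+1)); first by rewrite mulr_ge0 // sf_ge0.
exact: sqrt_mono (ltn_ord k).
Qed.
Lemma size_X_le {n} {q : {poly R}} : (size q <= n)%N -> (size ('X * q)%R <= n.+1)%N.
Proof.
move/leq_sizeP => H; apply/leq_sizeP => j hj; rewrite coefXM.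
case: j hj => //= j hj; exact: H.
Qed.
Lemma size_deriv_le {n} {q : {poly R}} : (size q <= n)%N -> (size q^`() <= n)%N.
Proof.
move/leq_sizeP => H; apply/leq_sizeP => j hj; rewrite coef_deriv H ?mul0rn //.
exact: leqW.
Qed.
Lemma size_D1_le {n} {q : {poly R}} : (size q <= n)%N -> (size (D1 q) <= n.+1)%N.
Proof.
move=> h; have h1 := size_X_le h; have h2 := leqW (size_deriv_le h).
move/leq_sizeP: h1 => h1; move/leq_sizeP: h2 => h2.
by apply/leq_sizeP => j hj; rewrite coefB h1 // h2 // subr0.
Qed.

Lemma Nn_D1 {n} {q : {poly R}} : (size q <= n)%N ->
  Nn n.+1 (D1 q) <= 2 * Num.sqrt n.+1%:R * Nn n q.
Proof.
move=> h; apply: le_trans (Nn_sub _ _ _) _.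
have h1 := Nn_deriv (leqW h); rewrite (Nn_widen _ q h) in h1.
have h2 := Nn_X h.
have h3 : Num.sqrt n%:R * Nn n q <= Num.sqrt n.+1%:R * Nn n q.
  by apply: ler_wpM2r; [exact: Nn_ge0 | exact: sqrt_mono].
have := lerD h1 (le_trans h2 h3); move/le_trans; apply.
rewrite le_eqVlt; apply/orP; left; apply/eqP; ring.
Qed.

Lemma iter_D1_bound (p : {poly R}) b :
  (size (iter b D1 p) <= size p + b)%N /\
  Nn (size p + b) (iter b D1 p) <= 2 ^+ b * Nn (size p) p * sf (size p + b).
Proof.
elim: b => [|b [IHs IHn]].
  rewrite addn0 /= expr0 mul1r; split => //.
  by rewrite ler_peMr ?Nn_ge0 // sf_ge1.
rewrite addnS /=; split; first exact: size_D1_le.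
apply: le_trans (Nn_D1 IHs) _.
rewrite sfS exprS.
have h0 : 0 <= 2 * Num.sqrt (size p + b).+1%:R :> R by rewrite mulr_ge0 ?sqrtr_ge0.
apply: le_trans (ler_wpM2l h0 IHn) _.
rewrite le_eqVlt; apply/orP; left; apply/eqP; ring.
Qed.

Lemma iter_X_bound (q : {poly R}) n K a : (size q <= n)%N -> Nn n q <= K * sf n ->
  (size ('X^a * q)%R <= n + a)%N /\ Nn (n + a) ('X^a * q) <= K * sf (n + a).
Proof.
move=> hs hn; elim: a => [|a [IHs IHn]]; first by rewrite expr0 mul1r addn0.
rewrite addnS exprS -mulrA; split; first exact: size_X_le.
apply: le_trans (Nn_X IHs) _.
have K0 : 0 <= K.
  have h := le_trans (Nn_ge0 n q) hn.
  by rewrite -(pmulr_lge0 _ (lt_le_trans ltr01 (sf_ge1 n))).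
rewrite sfS.
have h1 := ler_wpM2l (sqrtr_ge0 (n + a)%:R) IHn.
apply: le_trans h1 _.
have h2 : Num.sqrt (n + a)%:R <= Num.sqrt (n + a).+1%:R :> R by exact: sqrt_mono.
rewrite mulrCA; exact: lerMl2 K0 (lerMr2 (sf_ge0 _) h2).
Qed.
Lemma pow_le_fact_exp (x : R) k : 0 <= x -> x ^+ k <= k`!%:R * expR x.
Proof.
move=> x0; case: k => [|k].
  rewrite expr0 fact0 mul1r; apply: le_trans (expR_ge1Dx x).
  by rewrite lerDl.
have := expR_ge1Dxn k x0.
have f0 : 0 < (k.+1)`!%:R :> R by rewrite ltr0n fact_gt0.
move=> h; have : x ^+ k.+1 / (k.+1)`!%:R <= expR x.
  by apply: le_trans h; rewrite lerDr.
by rewrite ler_pdivrMr // mulrC.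
Qed.

Lemma sup_pow (k : nat) (t : R) : `|t| ^+ k * Ew (2^-1) t <= sf k.
Proof.
have E0 : 0 <= Ew (2^-1) t by rewrite /Ew expR_ge0.
have E2 : Ew (2^-1) t ^+ 2 = (expR (t ^+ 2))^-1.
  rewrite /Ew -expRM_natl -expRN; congr expR.
  by rewrite mulrN mulrA mulfV ?pnatr_eq0 // mul1r.
have L0 : 0 <= `|t| ^+ k * Ew (2^-1) t by rewrite mulr_ge0 // exprn_ge0.
rewrite -(ger0_norm L0) -sqrtr_sqr /sf ler_sqrt ?ler0n //.
rewrite exprMn E2 -exprM mulnC exprM real_normK ?num_real //.
have ex0 : 0 < expR (t ^+ 2) by exact: expR_gt0.
rewrite ler_pdivrMr //; exact: pow_le_fact_exp (sqr_ge0 t).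
Qed.
Lemma Nn_sup n (q : {poly R}) (t : R) : (size q <= n)%N ->
  `|q.[t]| * Ew (2^-1) t <= Nn n q.
Proof.
move=> H; have E0 : 0 <= Ew (2^-1) t by rewrite /Ew expR_ge0.
rewrite (horner_coef_wide t H) /Nn.
apply: le_trans (lerMr2 E0 (ler_norm_sum _ _ _)) _.
rewrite mulr_suml; apply: ler_sum => k _.
rewrite normrM normrX -mulrA; exact: lerMl2 (normr_ge0 _) (sup_pow k t).
Qed.
End B.

Lemma bin_le_exp N k : ('C(N, k) <= 2 ^ N)%N.
Proof.
case: (leqP k N) => [kN|NK]; last by rewrite bin_small.
have := Pascal 1 1 N; rewrite (bigD1 (Ordinal (kN : (k < N.+1)%N))) //= !exp1n muln1.
move=> E; rewrite -[X in (_ <= X ^ _)%N]/(1+1)%N E muln1; exact: leq_addr.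
Qed.

Lemma fact_le_pow m : (m`! <= m ^ m)%N.
Proof.
elim: m => // m IH; rewrite factS expnS leq_mul2l /=.
apply: leq_trans IH _; case: m => // m; rewrite leq_exp2r //.
Qed.

Lemma fact_add_le n m : ((n + m)`! <= 2 ^ n * n`! * (4 ^ m * m ^ m))%N.
Proof.
rewrite -(bin_fact (leq_addr m n)) addKn.
apply: (@leq_trans (2 ^ (n + m) * (n`! * m`!))); first by rewrite leq_mul2r bin_le_exp orbT.
rewrite expnD -mulnA -mulnA leq_mul2l; apply/orP; right.
rewrite mulnCA leq_mul2l; apply/orP; right.
apply: leq_mul; last exact: fact_le_pow.
by case: m => // m; rewrite leq_exp2r.
Qed.

Arguments Nn {R}. Arguments D1 {R}. Arguments iter_D1_bound {R}. Arguments iter_X_bound {R}.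
Arguments Nn_sup {R}. Arguments Nn_ge0 {R}. Arguments lerMl2 {R x y z}. Arguments lerMr2 {R x y z}.
Section B2.
Variable R : realType.
Definition K1 (p : {poly R}) : R :=
  Nn (size p) p * Num.sqrt ((2 ^ size p * (size p)`!)%N%:R).

Lemma bound1D (p : {poly R}) a b (t : R) :
  `|t ^+ a * (iter b D1 p).[t] * Ew (2^-1) t|
    <= K1 p * 4 ^+ (a + b) * Num.sqrt ((a + b) ^ (a + b))%N%:R.
Proof.
set n0 := size p; set m := (a + b)%N.
have [hs hn] := iter_D1_bound p b.
have [hs2 hn2] := iter_X_bound _ _ _ a hs hn.
have E0 : 0 <= Ew (2^-1) t by rewrite /Ew expR_ge0.
have e1 : t ^+ a * (iter b D1 p).[t] = ('X^a * iter b D1 p).[t] by rewrite hornerM hornerXn.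
rewrite e1 normrM (ger0_norm E0).
apply: le_trans (Nn_sup _ _ t hs2) _; apply: le_trans hn2 _.
have -> : (size p + b + a = n0 + m)%N by rewrite /n0 /m -addnA [(b + a)%N]addnC.
set A := (2 ^ n0 * n0`!)%N.
have hsf : sf R (n0 + m) <= Num.sqrt (A%:R) * 2 ^+ m * Num.sqrt (m ^ m)%N%:R.
  have h1 : sf R (n0 + m) <= Num.sqrt ((A * (4 ^ m * m ^ m))%N%:R).
    by rewrite /sf ler_sqrt ?ler0n // ler_nat fact_add_le.
  apply: le_trans h1 _; rewrite natrM sqrtrM ?ler0n // natrM sqrtrM ?ler0n //.
  have e4 : (4%:R : R) = 2 ^+ 2 by rewrite expr2 -natrM.
  rewrite mulrA natrX e4 -exprM mulnC exprM sqrtr_sqr.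
  by rewrite ger0_norm // exprn_ge0.
have N0 : 0 <= Nn n0 p by exact: Nn_ge0.
have h2 : (2:R) ^+ b * 2 ^+ m <= 4 ^+ m.
  have e4 : (4 : R) = 2 * 2 by rewrite -natrM.
  rewrite e4 exprMn; apply: lerMr2; first exact: exprn_ge0.
  by apply: ler_weXn2l; [rewrite ler1n | rewrite /m leq_addl].
rewrite -/n0; have x0 : 0 <= 2 ^+ b * Nn n0 p :> R by rewrite mulr_ge0 // exprn_ge0.
apply: le_trans (lerMl2 x0 hsf) _.
rewrite /K1 -/n0.
have s0 : 0 <= Num.sqrt (A%:R : R) by exact: sqrtr_ge0.
have s1 : 0 <= Num.sqrt ((m ^ m)%N%:R : R) by exact: sqrtr_ge0.
have -> : 2 ^+ b * Nn n0 p * (Num.sqrt A%:R * 2 ^+ m * Num.sqrt (m ^ m)%:R)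
   = (Nn n0 p * Num.sqrt A%:R) * ((2 ^+ b * 2 ^+ m)) * Num.sqrt (m ^ m)%:R by ring.
apply: lerMr2 s1 _; exact: lerMl2 (mulr_ge0 N0 s0) h2.
Qed.
End B2.

Section C.
Variable R : realType.
Variable d : nat.
Implicit Types (P : 'I_d -> {poly R}) (w c : R).

Lemma upd_same P j (q r : {poly R}) : upd (upd P j q) j r = upd P j r.
Proof. by apply/funext => i; rewrite /upd; case: eqP. Qed.
Lemma upd_at P j (q : {poly R}) : upd P j q j = q.
Proof. by rewrite /upd eqxx. Qed.
Lemma upd_id P j : upd P j (P j) = P.
Proof. by apply/funext => i; rewrite /upd; case: eqP => // ->. Qed.

Lemma iter_pderiv_Prod w c P (j : 'I_d) n :
  iter n (pderiv j) (Prod w c P) = Prod w c (upd P j (iter n (Dw (2 * w)) (P j))).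
Proof.
elim: n => [|n IH]; first by rewrite /= upd_id.
by rewrite iterS IH pderiv_Prod upd_same upd_at iterS.
Qed.

Lemma dseq_Prod (s : seq 'I_d) w c P : exists P', dseq s (Prod w c P) = Prod w c P'.
Proof.
elim: s => [|j s [P' IH]]; first by exists P.
exists (upd P' j (Dw (2 * w) (P' j))).
by rewrite /dseq /= -/(dseq s _) IH pderiv_Prod.
Qed.

Lemma foldr_Prod (b : 'I_d -> nat) (s : seq 'I_d) w c P : uniq s ->
  foldr (fun j g => iter (b j) (@pderiv R d j) g) (Prod w c P) s =
  Prod w c (fun i => if i \in s then iter (b i) (Dw (2 * w)) (P i) else P i).
Proof.
elim: s => [_|j s IH /= /andP[js us]].
  by congr Prod; apply/funext => i.
rewrite IH // iter_pderiv_Prod; congr Prod; apply/funext => i.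
rewrite /upd in_cons; case: eqP => [->|_] //=.
by rewrite (negbTE js).
Qed.

Lemma dmulti_Prod (b : 'I_d -> nat) w c P :
  dmulti b (Prod w c P) = Prod w c (fun i => iter (b i) (Dw (2 * w)) (P i)).
Proof.
rewrite /dmulti foldr_Prod ?enum_uniq //; congr Prod; apply/funext => i.
by rewrite mem_enum.
Qed.

Lemma smooth_Prod w c P : smooth (Prod w c P).
Proof.
move=> s; have [P' ->] := dseq_Prod s w c P; split; first exact: cont_Prod.
move=> x j; exact: (@ex_derive _ _ _ _ _ _ _ (is_derive_Prod w c P' x j)).
Qed.
Definition Qh (g : 'I_d -> nat) : 'I_d -> {poly R} := fun i => iter (g i) (Dw (2 * 1)) 1.
Definition C0 (g : 'I_d -> nat) : R :=
  (Num.sqrt (2 ^+ mi_abs g * (mi_fact g)%:R * Num.sqrt (pi ^+ d)))^-1 * (-1) ^+ mi_abs g.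

Lemma hermite_Prod (g : 'I_d -> nat) : hermite_fun g = Prod (2^-1) (C0 g) (Qh g).
Proof.
have e : (fun y : 'rV[R]_d => expR (- sqnorm y)) = Prod 1 1 (fun _ => 1).
  apply/funext => y; rewrite /Prod /sqnorm mul1r -sumrN expR_sum.
  by apply: eq_bigr => i _; rewrite /gfun /Ew hornerC mul1r mul1r.
apply/funext => x; rewrite /hermite_fun /hermite_poly e dmulti_Prod.
have eS : expR (sqnorm x) = \prod_(i < d) expR (x 0 i ^+ 2) by rewrite /sqnorm expR_sum.
have eS2 : expR (- sqnorm x / 2) = \prod_(i < d) expR (- (x 0 i ^+ 2) / 2).
  by rewrite /sqnorm -sumrN mulr_suml expR_sum.
rewrite eS eS2 /Prod.
have key : \prod_(i < d) expR (x 0 i ^+ 2) *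
    \prod_(i < d) gfun 1 (iter (g i) (Dw (2 * 1)) 1) (x 0 i) *
    \prod_(i < d) expR (- x 0 i ^+ 2 / 2) =
    \prod_(i < d) gfun 2^-1 (Qh g i) (x 0 i).
  rewrite -!big_split /=; apply: eq_bigr => i _; rewrite /gfun /Ew /Qh.
  set q := (iter _ _ _).[_].
  have -> : expR (x 0 i ^+ 2) * (q * expR (- (1 * x 0 i ^+ 2))) * expR (- x 0 i ^+ 2 / 2)
     = q * (expR (x 0 i ^+ 2) * expR (- (1 * x 0 i ^+ 2)) * expR (- x 0 i ^+ 2 / 2)) by ring.
  rewrite -!expRD; congr (_ * expR _); ring.
rewrite -key /C0; ring.
Qed.
Lemma Dw_half : Dw (2 * 2^-1 : R) = D1.
Proof. by apply/funext => p; rewrite /Dw /D1 mulfV ?pnatr_eq0 // scale1r. Qed.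

Lemma K1_ge0 (p : {poly R}) : 0 <= @K1 R p.
Proof. by rewrite /K1 mulr_ge0 ?sqrtr_ge0 // Nn_ge0. Qed.

Lemma hermite_bound (g : 'I_d -> nat) : exists K : R, 0 <= K /\ forall a b (x : 'rV[R]_d),
  `|monom a x * dmulti b (hermite_fun g) x|
     <= K * 4 ^+ mi_abs (mi_add a b) * @mi_halfpow R d (mi_add a b).
Proof.
exists (`|C0 g| * \prod_(i < d) @K1 R (Qh g i)); split.
  by rewrite mulr_ge0 // prodr_ge0 // => i _; exact: K1_ge0.
move=> a b x; rewrite hermite_Prod dmulti_Prod Dw_half /Prod /monom.
rewrite mulrCA normrM -big_split normr_prod /=.
rewrite -!mulrA; apply: lerMl2 (normr_ge0 _) _.
rewrite /mi_abs /mi_add /mi_halfpow -prodrXr mulrA -big_split -big_split /=.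

apply: ler_prod => i _; rewrite normr_ge0 /=.
rewrite /gfun mulrA; exact: bound1D.
Qed.
End C.

Local Close Scope classical_set_scope.

Theorem proposition4p6 (R : realType) (d : nat) (M : R -> ('I_d -> nat) -> R) :
  weight_matrix M ->
  (* (i) *)
  ((* (R1) *)
   (forall l : R, 0 < l -> exists k B C H : R,
       l <= k /\ 0 < B /\ 0 < C /\ 0 < H /\
       forall a b : 'I_d -> nat,
         @mi_halfpow R d a * M l b
           <= B * C ^+ mi_abs a * H ^+ mi_abs (mi_add a b) * M k (mi_add a b)) ->
   (* (R2) *)
   (forall l : R, 0 < l -> exists k A : R,
       l <= k /\ 1 <= A /\
       forall (a : 'I_d -> nat) (j : 'I_d),
         M l (mi_add a (mi_unit j)) <= A ^+ (mi_abs a).+1 * M k a) ->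
   forall g : 'I_d -> nat, S_roumieu M (hermite_fun g)) /\
  (* (ii) *)
  ((* (B1) *)
   (forall l : R, 0 < l -> exists k H : R,
       0 < k /\ k <= l /\ 0 < H /\
       forall C : R, 0 < C -> exists B : R, 0 < B /\
         forall a b : 'I_d -> nat,
           @mi_halfpow R d a * M k b
             <= B * C ^+ mi_abs a * H ^+ mi_abs (mi_add a b) * M l (mi_add a b)) ->
   (* (B2) *)
   (forall l : R, 0 < l -> exists k A : R,
       0 < k /\ k <= l /\ 1 <= A /\
       forall (a : 'I_d -> nat) (j : 'I_d),
         M k (mi_add a (mi_unit j)) <= A ^+ (mi_abs a).+1 * M l a) ->
   forall g : 'I_d -> nat, S_beurling M (hermite_fun g)).
Proof.
move=> [Mpos [M0 Mmono]].
have ez : forall n : 'I_d -> nat, mi_add n (@mi_zero d) = n.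
  by move=> n; apply/funext => i; rewrite /mi_add /mi_zero addn0.
have sm : forall g : 'I_d -> nat, smooth (@hermite_fun R d g).
  by move=> g; rewrite hermite_Prod; exact: smooth_Prod.
split.
- move=> R1 _ g; split; first exact: sm.
  have [k [B [C [H [hk [B0 [C0' [H0 HR]]]]]]]] := R1 1 ltr01.
  have [K [K0 HK]] := hermite_bound R d g.
  exists k, (4 * C * H); split; first exact: lt_le_trans ltr01 hk.
  split; first by rewrite !mulr_gt0.
  exists (K * B) => a b x.
  have h1 := HR (mi_add a b) (@mi_zero d).
  rewrite M0 ?ltr01 // mulr1 ez in h1.
  apply: le_trans (HK a b x) _.
  have x0 : 0 <= K * 4 ^+ mi_abs (mi_add a b) by rewrite mulr_ge0 // exprn_ge0.
  apply: le_trans (lerMl2 x0 h1) _.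
  by rewrite le_eqVlt; apply/orP; left; apply/eqP; rewrite !exprMn; ring.
- move=> B1 _ g; split; first exact: sm.
  move=> l h l0 h0.
  have [k [H [k0 [kl [H0 HB]]]]] := B1 l l0.
  pose C := h / (4 * H).
  have C0' : 0 < C by rewrite /C divr_gt0 // mulr_gt0.
  have [B [B0 HB']] := HB C C0'.
  have [K [K0 HK]] := hermite_bound R d g.
  exists (K * B) => a b x.
  have h1 := HB' (mi_add a b) (@mi_zero d).
  rewrite M0 // mulr1 ez in h1.
  apply: le_trans (HK a b x) _.
  have x0 : 0 <= K * 4 ^+ mi_abs (mi_add a b) by rewrite mulr_ge0 // exprn_ge0.
  apply: le_trans (lerMl2 x0 h1) _.
  have eh : h = 4 * C * H.
    by rewrite /C; field; rewrite gt_eqF.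
  by rewrite le_eqVlt; apply/orP; left; apply/eqP; rewrite eh !exprMn; ring.
Qed.
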